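(* Let $R\subseteq\mathcal{D}^\Sigma$ with $n=|\Sigma|$ and let $k\ge0$ be an integer with $|R|\le|\mathcal{D}|^k$. Then there exist a set $\textup{T}$ of $k$ attributes with $\textup{T}\cap\Sigma=\emptyset$ and $\widehat R\subseteq\mathcal{D}^{\textup{T}\cup\Sigma}$ such that $$R=\pi_\Sigma\Big[\Join_{i\in\Sigma}\pi_{\textup{T}\cup\{i\}}\widehat R\Big],$$ i.e. with $\textup{T}=\{t_1,\dots,t_k\}$ and $R_i=\pi_{\textup{T}\cup\{i\}}\widehat R$, $R(x)\iff\exists t_1\dots\exists t_k\,[\bigwedge_{i\in\Sigma}R_i(t_1,\dots,t_k,x_i)]$. In particular, $R$ is projoin reducible when $k\le n-2$, and projoin reducible to binaries when $k=1$.
   Context: Attributed relation: $R\subseteq\mathcal{D}^\Sigma$, $\Sigma$ a finite set of attributes; $\pi_\Lambda R=\{a|_\Lambda:a\in R\}$. The join of $R_i\subseteq\mathcal{D}^{\Lambda_i}$ is $\{a\in\mathcal{D}^{\cup_i\Lambda_i}: a|_{\Lambda_i}\in R_i\ \forall i\}$. $R\subseteq\mathcal{D}^\Sigma$ is a projoin over a cover $\textup{T}\cup\Sigma=\Lambda_1\cup\dots\cup\Lambda_m$ (with $\textup{T}\cap\Sigma=\emptyset$; elements of $\textup{T}$ are called parameters) if there are $R^{\Lambda_i}\subseteq\mathcal{D}^{\Lambda_i}$ with $R=\pi_\Sigma[R^{\Lambda_1}\Join\dots\Join R^{\Lambda_m}]$; it is projoin reducible if this holds with $0<|\Lambda_i|<|\Sigma|$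 for all $i$, and projoin reducible to binaries if moreover all $|\Lambda_i|=2$. *)

(* Defs.v *)
From HB Require Import structures.
From mathcomp Require Import all_boot.
From mathcomp Require Export finmap.
Set Implicit Arguments. Unset Strict Implicit. Unset Printing Implicit Defensive.
Local Open Scope fset_scope.

(* Attribute names are natural numbers (an unbounded supply of attributes).
   A tuple over the attribute set L, i.e. an element of D^L, is represented as
   a partial map  nat -> option D  whose domain is exactly L. *)
Definition tup (D : Type) := nat -> option D.

Definition tup_on (D : Type) (L : {fset nat}) (a : tup D) : Prop :=
  forall x, x \in L <-> a x <> None.

Definition relation (D : Type) := tup D -> Prop.

Definition rel_on (D : Type) (L : {fset nat}) (R : relation D) : Prop :=
  forall a, R a -> tup_on L a.

Definition rel_eq (D : Type) (R S : relation D) : Prop := forall a, R a <-> S a.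

Definition restr (D : Type) (L : {fset nat}) (a : tup D) : tup D :=
  fun x => if x \in L then a x else None.

Definition proj (D : Type) (L : {fset nat}) (R : relation D) : relation D :=
  fun b => exists a, R a /\ b = restr L a.

Definition bigU (I : finType) (L : I -> {fset nat}) : {fset nat} :=
  \big[@fsetU _/fset0]_(i : I) L i.

Definition join (D : Type) (I : finType) (L : I -> {fset nat})
    (Rs : I -> relation D) : relation D :=
  fun a => tup_on (bigU L) a /\ forall i, Rs i (restr (L i) a).

Definition card_le (A B : Type) : Prop := exists f : A -> B, injective f.

Definition projoin (D : Type) (Sig T : {fset nat}) (m : nat)
    (L : 'I_m -> {fset nat}) (R : relation D) : Prop :=
  T `&` Sig = fset0 /\ T `|` Sig = bigU L /\
  exists Rs : 'I_m -> relation D,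
    (forall i, rel_on (L i) (Rs i)) /\ rel_eq R (proj Sig (join L Rs)).

Definition projoin_reducible (D : Type) (Sig : {fset nat}) (R : relation D) : Prop :=
  exists (T : {fset nat}) (m : nat) (L : 'I_m -> {fset nat}),
    projoin Sig T L R /\ forall i, 0 < #|` L i| < #|` Sig|.

Definition projoin_reducible_bin (D : Type) (Sig : {fset nat}) (R : relation D) : Prop :=
  exists (T : {fset nat}) (m : nat) (L : 'I_m -> {fset nat}),
    projoin Sig T L R /\ forall i, 0 < #|` L i| < #|` Sig| /\ #|` L i| = 2.

(* Main.v *)
Require Import Defs.
From mathcomp Require Import all_boot finmap zify.
From Stdlib Require Import FunctionalExtensionality.
Local Open Scope fset_scope.

Section Core.
Variables (D : Type) (Sig : {fset nat}) (R : relation D) (k : nat).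
Hypothesis HR : rel_on Sig R.
Variable f : {a : tup D | R a} -> ('I_k -> D).
Hypothesis finj : injective f.

Definition N := (\max_(x <- Sig) x).+1.

Lemma Sig_lt x : x \in Sig -> x < N.
Proof. by move=> Hx; rewrite ltnS; by rewrite (@leq_bigmax_seq _ (enum_fset Sig) xpredT (fun x : nat => x) x). Qed.

Definition T : {fset nat} := [fset x in iota N k].

Lemma inT x : (x \in T) = (N <= x < N + k).
Proof. by rewrite /T in_fset /= mem_iota. Qed.

Lemma cardT : #|` T| = k.
Proof. by rewrite card_fseq undup_id ?iota_uniq // size_iota. Qed.

Lemma TSig : T `&` Sig = fset0.
Proof.
apply/fsetP => x.
rewrite inE inT !inE; apply/negbTE/negP => /andP[/andP[Hx _] /Sig_lt]; lia.
Qed.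

Definition enc (c : 'I_k -> D) (x : nat) : option D :=
  if N <= x then omap c (insub (x - N)) else None.

Definition ext (a : {a : tup D | R a}) : tup D :=
  fun x => if x \in Sig then sval a x else enc (f a) x.

Definition Rhat : relation D := fun b => exists a, b = ext a.

Lemma enc_none c x : enc c x <> None <-> x \in T.
Proof.
rewrite inT /enc; case: (leqP N x) => H /=; last by split.
case: insubP => [j Hj _|Hj] /=; split => //.
- move=> _; move: Hj H; clear; lia.
- move: Hj H => /negP; clear; lia.
Qed.

Lemma enc_val c (j : 'I_k) : enc c ((N + j)%N) = Some (c j).
Proof.
rewrite /enc leq_addr addKn; case: insubP => [j' _ Hj|/negP]; last by rewrite ltn_ord.
by rewrite /= (val_inj Hj).
Qed.

Lemma ext_on a : tup_on (T `|` Sig) (ext a).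
Proof.
move=> x; rewrite inE /ext; case: (boolP (x \in Sig)) => Hx.
- rewrite orbT; have := HR _ (proj2_sig a) x; rewrite Hx; tauto.
- rewrite orbF; split => [H|]; [by apply/enc_none | by move/enc_none].
Qed.

Lemma Rhat_on : rel_on (T `|` Sig) Rhat.
Proof. by move=> b [a ->]; apply: ext_on. Qed.

Variables (I : finType) (g : I -> nat).
Hypothesis gin : forall i, g i \in Sig.
Hypothesis gsurj : forall x, x \in Sig -> exists i, g i = x.
Variable i0 : I.

Definition L (i : I) := T `|` [fset g i].

Lemma inbigU i x : x \in L i -> x \in Defs.bigU L.
Proof. move=> H; rewrite /Defs.bigU (bigD1 i) //=; apply/fsetUP; left; exact: H. Qed.

Lemma bigUL : Defs.bigU L = T `|` Sig.
Proof.
apply/fsetP => x; apply/idP/idP.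
- rewrite /Defs.bigU; apply: (big_ind (fun A => x \in A -> x \in T `|` Sig)).
  + by rewrite inE.
  + by move=> A B HA HB; rewrite inE => /orP[/HA|/HB].
  + by move=> i _; rewrite /L !inE => /orP[->//|/eqP ->]; rewrite gin orbT.
- rewrite inE => /orP[Hx|/gsurj [i <-]].
  + by apply: (inbigU i0); rewrite /L inE Hx.
  + by apply: (inbigU i); rewrite /L !inE eqxx orbT.
Qed.

Lemma main : rel_eq R (proj Sig (join L (fun i => proj (L i) Rhat))).
Proof.
move=> a; split.
- move=> Ra; exists (ext (exist _ a Ra)); split.
  + split; first by rewrite bigUL; apply: ext_on.
    by move=> i; exists (ext (exist _ a Ra)); split => //; exists (exist _ a Ra).
  + apply: functional_extensionality => x; rewrite /restr /ext /=.
    case: ifP => // Hx; have := HR _ Ra x; rewrite Hx; case: (a x) => //.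
    by move=> d [_ H]; have := H ltac:(discriminate).
- move=> [b [[_ Hb] ->]].
  have H : forall i, exists ai, forall x, x \in L i -> b x = ext ai x.
    move=> i; have [c [[ai ->] Hc]] := Hb i; exists ai => x Hx.
    by have := f_equal (fun h => h x) Hc; rewrite /restr Hx.
  have [a0 H0] := H i0.
  have Heq : forall i ai, (forall x, x \in L i -> b x = ext ai x) -> ai = a0.
    move=> i ai Hi; apply: finj; apply: functional_extensionality => j.
    have HT : (N + j)%N \in T by rewrite inT leq_addr ltn_add2l ltn_ord.
    have HS : (N + j)%N \in Sig = false.
      by apply/negP => /Sig_lt; lia.
    have := Hi ((N + j)%N); have := H0 ((N + j)%N); rewrite /L /ext HS !enc_val.
    have HL : forall i, (N + j)%N \in T `|` [fset g i] by move=> i'; rewrite inE HT.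
    by move=> /(_ (HL i0)) -> /(_ (HL i)) [] ->.
  have -> : restr Sig b = sval a0; last by apply: (proj2_sig a0).
  apply: functional_extensionality => x; rewrite /restr.
  case: ifP => Hx.
  + have [i Hi] := gsurj _ Hx; have [ai Hai] := H i.
    rewrite Hai; last by rewrite /L !inE Hi eqxx orbT.
    by rewrite (Heq _ _ Hai) /ext Hx.
  + have := HR _ (proj2_sig a0) x; rewrite Hx; case: (sval a0 x) => // d [_ H']; by have := H' ltac:(discriminate).
Qed.

End Core.
Theorem theorem21 (D : Type) (Sig : {fset nat}) (R : relation D) (k : nat) :
  Sig != fset0 ->
  rel_on Sig R ->
  card_le {a : tup D | R a} ('I_k -> D) ->
  (exists (T : {fset nat}) (Rhat : relation D),
      #|` T| = k /\ T `&` Sig = fset0 /\ rel_on (T `|` Sig) Rhat /\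
      rel_eq R
        (proj Sig (join (fun i : Sig => T `|` [fset val i])
                        (fun i : Sig => proj (T `|` [fset val i]) Rhat))))
  /\ (k + 2 <= #|` Sig| -> projoin_reducible Sig R)
  /\ (k = 1 -> 3 <= #|` Sig| -> projoin_reducible_bin Sig R).
Proof.
move=> S0 HR [f finj].
have [x0 Hx0] : exists x, x \in Sig.
  case: (fset_0Vmem Sig) => [E|[x Hx]]; last by exists x. by move: S0; rewrite E eqxx.
have gsurj : forall x, x \in Sig -> exists i : Sig, val i = x.
  by move=> x Hx; exists [` Hx].
have gin : forall i : Sig, val i \in Sig by move=> i; exact: valP.
split.
  exists (T Sig k), (@Rhat D Sig R k f); split; first exact: cardT.
  split; first exact: TSig.
  split; first exact: (@Rhat_on D Sig R k HR f).
  exact: (@main D Sig R k HR f finj Sig val gin gsurj [` Hx0]).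
have [Tq [Rs [HT [HTS [Hon [L' [Hpj HL]]]]]]] : exists (Tq : {fset nat}) (Rhat : relation D),
  #|` Tq| = k /\ Tq `&` Sig = fset0 /\ rel_on (Tq `|` Sig) Rhat /\ 
  exists L' : 'I_#|{: Sig}| -> {fset nat}, projoin Sig Tq L' R /\ forall i, #|` L' i| = k.+1.
  exists (T Sig k), (@Rhat D Sig R k f); split; first exact: cardT.
  split; first exact: TSig.
  split; first exact: (@Rhat_on D Sig R k HR f).
  pose g (i : 'I_#|{: Sig}|) := val (enum_val i).
  have gin' : forall i, g i \in Sig by move=> i; exact: valP.
  have gsurj' : forall x, x \in Sig -> exists i, g i = x.
    by move=> x Hx; exists (enum_rank [` Hx]); rewrite /g enum_rankK.
  have i0 : 'I_#|{: Sig}| by exact: (enum_rank [` Hx0]).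
  exists (L Sig k _ g); split.
  - split; first exact: TSig.
    split; first by rewrite (@bigUL Sig k _ g gin' gsurj' i0).
    exists (fun i => proj (L Sig k _ g i) (@Rhat D Sig R k f)); split.
    + move=> i b [a [Ha ->]] x; rewrite /restr; case: ifP => Hx; last by split.
      have := (@Rhat_on D Sig R k HR f) _ Ha x; have : x \in T Sig k `|` Sig.
        by move: Hx; rewrite /L !inE => /orP[->//|/eqP ->]; rewrite gin' orbT.
      by move=> -> [].
    + exact: (@main D Sig R k HR f finj _ g gin' gsurj' i0).
  - move=> i; rewrite /L fsetUC cardfsU1 cardT.
    have -> : g i \notin T Sig k.
      apply/negP => H; have := TSig Sig k; move/fsetP/(_ (g i)).
      by rewrite inE H /= gin'.
    by [].
have cS : #|` Sig| = #|{: Sig}| by rewrite cardfE.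
split.
  move=> Hk; exists Tq, #|{: Sig}|, L'; split => // i; rewrite HL; lia.
move=> Hk1 Hk; exists Tq, #|{: Sig}|, L'; split => // i; rewrite HL; lia.
Qed.
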